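(* Let $p$ be a prime, $m,t\ge1$, $R^t=\mathbb{F}_{p^m}[u]/\langle u^t\rangle$, $\omega(x)=\omega_0(x)+u\omega_1(x)+\dots+u^{t-1}\omega_{t-1}(x)\in R^t[x]$ with $\omega_i(x)\in\mathbb{F}_{p^m}[x]$, and $R^{t,\omega}=R^t[x]/\langle\omega(x)\rangle$. Let $\omega_0(x)=v_1(x)^{n_1}v_2(x)^{n_2}\cdots v_l(x)^{n_l}$ be the factorization of $\omega_0(x)$ into irreducible polynomials $v_i(x)\in\mathbb{F}_{p^m}[x]$ with positive integers $n_i$. Then every ideal of $R^{t,\omega}$ not contained in $\langle u\rangle$ can be expressed as $$\langle v_1(x)^{k_1}v_2(x)^{k_2}\cdots v_l(x)^{k_l}+u\,r(x)\rangle+J,$$ where $r(x)\in R^{t,\omega}$, $J$ is an ideal of $R^{t,\omega}$ contained in $\langle u\rangle$, and $0\le k_i\le n_i$ for $1\le i\le l$, not all $k_i=n_i$.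
   Context: Elements of $\mathbb{F}_{p^m}[x]$ are regarded as elements of $R^{t,\omega}$ via the natural inclusion $\mathbb{F}_{p^m}\subseteq R^t$. *)

(* Defs.v *)
From HB Require Import structures.
From mathcomp Require Import all_boot all_order all_algebra all_field.
Set Implicit Arguments. Unset Strict Implicit. Unset Printing Implicit Defensive.
Import GRing.Theory.
Local Open Scope ring_scope.

Definition is_ideal (S : comPzRingType) (I : S -> Prop) : Prop :=
  [/\ I 0, (forall a b, I a -> I b -> I (a + b)) & (forall r a, I a -> I (r * a))].

Definition principal_ideal (S : comPzRingType) (a : S) : S -> Prop :=
  fun x => exists r : S, x = r * a.

Definition ideal_add (S : comPzRingType) (I J : S -> Prop) : S -> Prop :=
  fun x => exists a b, [/\ I a, J b & x = a + b].

Definition ideal_sub (S : comPzRingType) (I J : S -> Prop) : Prop :=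
  forall x, I x -> J x.

Definition ideal_eq (S : comPzRingType) (I J : S -> Prop) : Prop :=
  forall x, I x <-> J x.

Definition is_quotient_map (A : comNzRingType) (S : comPzRingType)
  (pi : {rmorphism A -> S}) (a : A) : Prop :=
  (forall s : S, exists f : A, pi f = s) /\
  (forall f : A, pi f = 0 <-> exists g : A, f = g * a).

(* Main.v *)
Require Import Defs.
From HB Require Import structures.
From mathcomp Require Import all_boot all_order all_algebra all_field.
Import GRing.Theory.
Local Open Scope ring_scope.
From Stdlib Require Import Classical.
From mathcomp Require Import ring zify.
Lemma div_irr_pow (F : fieldType) (v : {poly F}) (hv : irreducible_poly v) (k : nat) :
  forall c : {poly F}, c %| v ^+ k -> ~~ (v ^+ k %| c) -> c %| v ^+ k.-1.
Proof.
have v0 := irredp_neq0 hv.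
elim: k => [|k IH] c hc hn.
  exfalso; move/negP: hn; apply; rewrite expr0.
  by rewrite /dvdp modp1.
have [g1|gv] := irredp_XsubCP hv (dvdp_gcdr c v).
  have cop : coprimep c v by rewrite -gcdp_eqp1.
  have : c %| 1 * v ^+ k.+1 by rewrite mul1r.
  rewrite Gauss_dvdpl ?coprimep_expr // => c1.
  exact: dvdp_trans c1 (dvd1p _).
have vc : v %| c by rewrite -(eqp_dvdl _ gv) dvdp_gcdl.
move: vc; rewrite dvdp_eq => /eqP cE.
move: hc; rewrite [X in X %| _]cE exprSr dvdp_mul2r // => hc.
case: k IH hc hn => [|k] IH hc hn.
  by exfalso; move/negP: hn; apply; rewrite cE expr1 dvdp_mulIr.
have hn' : ~~ (v ^+ k.+1 %| c %/ v).
  apply: contra hn => h; rewrite cE exprSr; exact: dvdp_mul h (dvdpp v).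
have := IH _ hc hn' => /= h.
by rewrite cE /= exprSr; apply: dvdp_mul h (dvdpp v).
Qed.

Lemma prod_dvd (F : fieldType) (I : eqType) (w : I -> {poly F}) (f : {poly F}) :
  (forall i j, i != j -> coprimep (w i) (w j)) ->
  forall s : seq I, uniq s -> (forall i, i \in s -> w i %| f) ->
  \prod_(i <- s) w i %| f.
Proof.
move=> hc; elim=> [|a s IH] /= hu hd; first by rewrite big_nil dvd1p.
case/andP: hu => ha hu.
rewrite big_cons Gauss_dvdp.
  rewrite hd ?mem_head //= IH // => i hi; apply: hd; by rewrite in_cons hi orbT.
elim: s ha {hu IH hd} => [|b s IH] ha; first by rewrite big_nil coprimep1.
rewrite big_cons coprimepMr; rewrite in_cons negb_or in ha.
case/andP: ha => hab has.
by rewrite (hc a b hab) (IH has).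
Qed.

Lemma ex_min (P : nat -> Prop) :
  (exists m, P m) -> exists m, P m /\ forall m', P m' -> (m <= m')%N.
Proof.
move=> [m0 Pm0]; apply: NNPP => H.
have key : forall m m', (m' <= m)%N -> ~ P m'.
  elim=> [|m IH] m' hm' Pm'.
    apply: H; exists m'; split => // m'' _.
    by move: hm'; rewrite leqn0 => /eqP ->.
  case: (leqP m' m) => h; first exact: IH h Pm'.
  apply: H; exists m'; split => // m'' Pm''.
  rewrite leqNgt; apply/negP => lt; apply: (IH m'') _ Pm''.
  by rewrite -ltnS (leq_trans lt).
exact: key (leqnn m0) Pm0.
Qed.
Theorem lemma3p1
  (p m t : nat) (F : finFieldType)
  (hp : prime p) (hm : (1 <= m)%N) (ht : (1 <= t)%N)
  (hF : #|F| = (p ^ m)%N)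
  (* R^t = F[u]/<u^t>, realized by the quotient map piu : F[u] -> R^t *)
  (Rt : comNzRingType) (piu : {rmorphism {poly F} -> Rt})
  (hRt : is_quotient_map piu ('X ^+ t))
  (* omega(x) = sum_{i<t} u^i omega_i(x), omega_i in F[x] *)
  (om : nat -> {poly F})
  (* R^{t,omega} = R^t[x]/<omega(x)>, realized by the quotient map piw *)
  (S : comPzRingType) (piw : {rmorphism {poly Rt} -> S})
  (hS : is_quotient_map piw
          (\sum_(i < t) (piu 'X ^+ i)%:P * map_poly (fun c => piu c%:P) (om i)))
  (* factorization of omega_0 into irreducibles *)
  (l : nat) (v : 'I_l -> {poly F}) (n : 'I_l -> nat)
  (hv_irr : forall i, irreducible_poly (v i))
  (hv_cop : forall i j, i != j -> coprimep (v i) (v j))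
  (hn : forall i, (0 < n i)%N)
  (hfact : om 0%N = \prod_(i < l) v i ^+ n i) :
  let uS : S := piw (piu 'X)%:P in
  let embS : {poly F} -> S := fun q => piw (map_poly (fun c => piu c%:P) q) in
  forall I : S -> Prop, is_ideal I ->
    ~ ideal_sub I (principal_ideal uS) ->
    exists (k : 'I_l -> nat) (r : S) (J : S -> Prop),
      [/\ is_ideal J, ideal_sub J (principal_ideal uS),
          (forall i, (k i <= n i)%N), ~ (forall i, k i = n i) &
          ideal_eq I (ideal_add
             (principal_ideal (embS (\prod_(i < l) v i ^+ k i) + uS * r)) J)].
Proof.
move=> uS embS I [I0 IA IM] notsub.
pose phi : {rmorphism F -> Rt} := (piu \o polyC)%FUN.
have embE : forall q, embS q = piw (map_poly phi q) by [].
have eD : forall a b, embS (a + b) = embS a + embS b.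
  by move=> a b; rewrite !embE !rmorphD.
have eM : forall a b, embS (a * b) = embS a * embS b.
  by move=> a b; rewrite !embE !rmorphM.
have IN : forall x, I x -> I (- x).
  by move=> x Ix; rewrite -mulN1r; apply: IM.
have L1 : forall s : S, exists f s', s = embS f + uS * s'.
  move=> s; have [P <-] := hS.1 s.
  have : exists f Q, P = map_poly phi f + (piu 'X)%:P * Q.
    elim/poly_ind: P => [|P c [f [Q ->]]].
      by exists 0, 0; rewrite rmorph0 mulr0 addr0.
    have [d <-] := hRt.1 c.
    have [d0 [d1 ->]] : exists d0 d1, d = d0%:P + 'X * d1.
      elim/poly_ind: d => [|d e _]; first by exists 0, 0; rewrite mulr0 addr0.
      by exists e, d; rewrite addrC mulrC.
    exists (f * 'X + d0%:P), (Q * 'X + (piu d1)%:P).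
    rewrite !rmorphD !rmorphM /= map_polyX map_polyC /=.
    ring.
  move=> [f [Q ->]]; exists f, (piw Q).
  by rewrite rmorphD rmorphM.
have Lw : exists s0, embS (om 0%N) = uS * s0.
  have hw := (hS.2 (\sum_(i < t) (piu 'X ^+ i)%:P * map_poly (fun c => piu c%:P) (om i))).2.
  have [t' tE] : exists t', t = t'.+1 by case: (t) ht => // t' _; exists t'.
  move: (hw (ex_intro _ 1 (esym (mul1r _)))); rewrite tE.
  rewrite big_ord_recl /= expr0 polyC1 mul1r.
  set T := \sum_(i < t') _.
  have -> : T = (piu 'X)%:P * \sum_(i < t') (piu 'X ^+ i)%:P * map_poly (fun c => piu c%:P) (om i.+1).
    rewrite /T mulr_sumr; apply: eq_bigr => i _.
    by rewrite /bump leq0n add1n exprS polyCM mulrA.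
  rewrite rmorphD rmorphM /= => /eqP; rewrite addr_eq0 => /eqP h.
  exists (- piw (\sum_(i < t') (piu 'X ^+ i)%:P * map_poly (fun c => piu c%:P) (om i.+1))).
  by rewrite mulrN /embS h.
have [s0 hs0] := Lw.
pose D (f : {poly F}) := exists s, I (embS f + uS * s).
have DM : forall q f, D f -> D (q * f).
  move=> q f [s Is]; exists (embS q * s).
  have := IM (embS q) _ Is; rewrite eM mulrDr; congr (I (_ + _)).
  by rewrite mulrCA.
have DA : forall f g, D f -> D g -> D (f + g).
  move=> f g [s Is] [s' Is']; exists (s + s').
  have := IA _ _ Is Is'; rewrite eD mulrDr; congr I.
  by rewrite -!addrA; congr (_ + _); rewrite addrCA.
pose Pm (m : nat) := exists k : 'I_l -> nat,
  [/\ forall i, (k i <= n i)%N, D (\prod_(i < l) v i ^+ k i) & (\sum_(i < l) k i)%N = m].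
have [mm [[k [hkn Dk hks]] hmin]] : exists m, Pm m /\ forall m', Pm m' -> (m <= m')%N.
  apply: ex_min; exists (\sum_(i < l) n i)%N, n; split => //.
  rewrite -hfact; exists (- s0); rewrite hs0 mulrN subrr; exact: I0.
pose g := \prod_(i < l) v i ^+ k i.
have C : forall f, D f -> g %| f.
  move=> f Df; rewrite /g.
  have := @prod_dvd F _ (fun i => v i ^+ k i) f _ (index_enum 'I_l) (index_enum_uniq _).
  move=> H; apply: H.
    by move=> i j hij; apply/coprimep_expl/coprimep_expr/hv_cop.
  move=> i _; case: (boolP (v i ^+ k i %| f)) => // hnd; exfalso.
  have [[a b] hab] := Bezoutp f (v i ^+ k i); rewrite /= in hab.
  set c := a * f + b * v i ^+ k i in hab.
  have cw : c %| v i ^+ k i by rewrite (eqp_dvdl _ hab) dvdp_gcdr.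
  have ncw : ~~ (v i ^+ k i %| c).
    apply: contra hnd => h; apply: dvdp_trans h _.
    by rewrite (eqp_dvdl _ hab) dvdp_gcdl.
  have cw' := @div_irr_pow _ _ (hv_irr i) _ _ cw ncw.
  pose M := \prod_(j < l | j != i) v j ^+ k j.
  have gE : g = v i ^+ k i * M by rewrite /g (bigD1 i).
  have DcM : D (c * M).
    have -> : c * M = (a * M) * f + b * g by rewrite gE /c; ring.
    by apply: DA; apply: DM.
  have Dk' : D (v i ^+ (k i).-1 * M).
    move: cw'; rewrite dvdp_eq => /eqP ->.
    by rewrite -mulrA; apply: DM.
  have ki0 : (0 < k i)%N.
    by rewrite lt0n; apply: contra hnd => /eqP ->; rewrite expr0 dvd1p.
  pose k' := fun j => if j == i then (k i).-1 else k j.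
  have : Pm (\sum_(j < l) k' j)%N.
    exists k'; split => //.
    - by move=> j; rewrite /k'; case: eqP => [->|_] //; apply: leq_trans (leq_pred _) (hkn i).
    - rewrite (bigD1 i) //= /k' eqxx (eq_bigr (fun j => v j ^+ k j)); first exact: Dk'.
      by move=> j /negPf ->.
  move/hmin; rewrite -hks (bigD1 i) //= [X in (_ <= X)%N](bigD1 i) //= /k' eqxx.
  have -> : (\sum_(j < l | j != i) (if j == i then (k i).-1 else k j) = \sum_(j < l | j != i) k j)%N.
    by apply: eq_bigr => j /negPf ->.
  move=> h; have : (k i + \sum_(j < l | j != i) k j <= (k i).-1 + \sum_(j < l | j != i) k j)%N := h.
  rewrite leq_add2r; lia.
have [r0 Ia] := Dk.
pose a := embS g + uS * r0.
have hx : forall x, I x -> exists q s, x = embS q * a + uS * s.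
  move=> x Ix; have [f [s xE]] := L1 x.
  have : D f by exists s; rewrite -xE.
  move/C; rewrite dvdp_eq => /eqP fE.
  exists (f %/ g), (s - embS (f %/ g) * r0).
  rewrite xE {1}fE eM /a; ring.
exists k, r0, (fun x => I x /\ principal_ideal uS x); split.
- split.
  + by split => //; exists 0; rewrite mul0r.
  + move=> x y [Ix [rx ex]] [Iy [ry ey]]; split; first exact: IA _ _ Ix Iy.
    by exists (rx + ry); rewrite ex ey mulrDl.
  + move=> r x [Ix [rx ex]]; split; first exact: IM r _ Ix.
    by exists (r * rx); rewrite ex mulrA.
- by move=> x [].
- exact: hkn.
- move=> hall; apply: notsub => x Ix.
  have [q [s ->]] := hx x Ix.
  have gw : g = om 0%N by rewrite hfact /g; apply: eq_bigr => i _; rewrite hall.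
  exists (embS q * (s0 + r0) + s).
  by rewrite /a gw hs0; ring.
- move=> x; split.
  + move=> Ix; have [q [s xE]] := hx x Ix.
    exists (embS q * a), (x - embS q * a); split.
    * by exists (embS q).
    * split; first by apply: IA Ix (IN _ (IM _ _ Ia)).
      by exists s; rewrite xE; ring.
    * by rewrite addrC subrK.
  + move=> [y [z [[ry ->] [Iz _] ->]]].
    by apply: IA => //; apply: IM.
Qed.
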